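(* Let $n\ge2$, let $\mathcal A$ be a maximal commutative subalgebra of $\mathcal M_d(\mathbb C)$, and let $\mathcal B$ be a maximal subalgebra of $\mathcal T_{n,d}[\mathcal A]$. Then: (i) $\mathcal D_{n,d}[\mathcal A]\subset\mathcal B$; (ii) if $A\in\mathcal B$, then $\mathbf E_k(A)\in\mathcal B$ for all $0\le k\le n-1$; (iii) $\mathcal B$ coincides with the linear span of $\mathbf E_0(\mathcal B),\dots,\mathbf E_{n-1}(\mathcal B)$; (iv) $\mathcal B$ is invariant under the action of $\mathfrak S_{n-1}$, i.e. $\sigma(A)\in\mathcal B$ for all $A\in\mathcal B$, $\sigma\in\mathfrak S_{n-1}$; (v) $\mathbf E_k(\mathcal B)\neq\{0\}$ for every $k=0,\dots,n-1$.
   Context: A block Toeplitz matrix is an $n\times n$ block matrix $A=(A_{i-j})_{i,j=0}^{n-1}$ with $A_m\in\mathcal M_d(\mathbb C)$. For $\mathcal A\subset\mathcal M_d(\mathbb C)$, $\mathcal T_{n,d}[\mathcal A]$ is the set of block Toeplitz matrices with all $A_m\in\mathcal A$, and $\mathcal D_{n,d}[\mathcal A]$ the set of those with additionally $A_m=0$ for $m\ne0$. A maximal subalgebra of $\mathcal T_{n,d}[\mathcal A]$ is a subalgebra of the matrix algebra (a linear subspace closed under multiplication) contained in $\mathcal T_{n,d}[\mathcal A]$ and maximal under inclusion among such. For $k=0,\dots,n-1$, $\mathbf E_k$ maps an $n\times n$ block matrix $T$ to the block matrix whose $(i,j)$ entry is $T_{i,j}$ if $i-j\in\{k,k-n\}$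 and $0$ otherwise. The group $\mathfrak S_{n-1}$ of permutations of $\{1,\dots,n-1\}$ acts on block Toeplitz matrices by $B=\sigma(A)$ with $B_0=A_0$, $B_k=A_{\sigma^{-1}(k)}$, $B_{k-n}=A_{\sigma^{-1}(k)-n}$ for $1\le k\le n-1$. *)

(* Defs.v *)
From HB Require Import structures.
From mathcomp Require Import all_boot all_order all_algebra all_fingroup.
Set Implicit Arguments. Unset Strict Implicit. Unset Printing Implicit Defensive.
Import Order.TTheory GRing.Theory Num.Theory.
Local Open Scope ring_scope.

(* The field of scalars: any numeric algebraically closed field C
   (e.g. the complex numbers).  d x d matrices over C: 'M[C]_d.
   An n x n block matrix with d x d blocks is a matrix 'M['M[C]_d]_n;
   its product (mulmx over the ring 'M[C]_d) is the usual block product,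
   i.e. the product in M_{nd}(C). *)

Section Defs.
Variable C : numClosedFieldType.

Definition is_subalg_d d (S : 'M[C]_d -> Prop) : Prop :=
  [/\ S 0,
      (forall X Y, S X -> S Y -> S (X + Y)),
      (forall (c : C) X, S X -> S (c *: X)) &
      (forall X Y, S X -> S Y -> S (X * Y))].

Definition is_commutative_d d (S : 'M[C]_d -> Prop) : Prop :=
  forall X Y, S X -> S Y -> X * Y = Y * X.

Definition is_max_comm_subalg d (S : 'M[C]_d -> Prop) : Prop :=
  [/\ is_subalg_d S, is_commutative_d S &
      forall S' : 'M[C]_d -> Prop, is_subalg_d S' -> is_commutative_d S' ->
        (forall X, S X -> S' X) -> forall X, S' X -> S X].

Definition bscale d n (c : C) (T : 'M['M[C]_d]_n) : 'M['M[C]_d]_n :=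
  map_mx (fun X => c *: X) T.

Definition is_subalg_b d n (S : 'M['M[C]_d]_n -> Prop) : Prop :=
  [/\ S 0,
      (forall X Y, S X -> S Y -> S (X + Y)),
      (forall (c : C) X, S X -> S (bscale c X)) &
      (forall X Y, S X -> S Y -> S (X *m Y))].

Definition toeplitz_mx d n (f : int -> 'M[C]_d) : 'M['M[C]_d]_n :=
  \matrix_(i < n, j < n) f ((i : nat)%:Z - (j : nat)%:Z).

Definition Tnd d n (A : 'M[C]_d -> Prop) (T : 'M['M[C]_d]_n) : Prop :=
  exists f : int -> 'M[C]_d,
    (forall m : int, - (n%:Z) < m < n%:Z -> A (f m)) /\ T = toeplitz_mx n f.

Definition Dnd d n (A : 'M[C]_d -> Prop) (T : 'M['M[C]_d]_n) : Prop :=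
  exists f : int -> 'M[C]_d,
    (forall m : int, - (n%:Z) < m < n%:Z -> A (f m)) /\
    (forall m : int, - (n%:Z) < m < n%:Z -> m != 0 -> f m = 0) /\
    T = toeplitz_mx n f.

Definition is_max_subalg_in d n (A : 'M[C]_d -> Prop)
    (B : 'M['M[C]_d]_n -> Prop) : Prop :=
  [/\ is_subalg_b B, (forall X, B X -> Tnd A X) &
      forall B' : 'M['M[C]_d]_n -> Prop, is_subalg_b B' ->
        (forall X, B X -> B' X) -> (forall X, B' X -> Tnd A X) ->
        forall X, B' X -> B X].

Definition Ek d n (k : nat) (T : 'M['M[C]_d]_n) : 'M['M[C]_d]_n :=
  \matrix_(i < n, j < n)
    if ((i : nat)%:Z - (j : nat)%:Z == k%:Z)
       || ((i : nat)%:Z - (j : nat)%:Z == k%:Z - n%:Z)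
    then T i j else 0.

Definition bspan d n (S : 'M['M[C]_d]_n -> Prop) (X : 'M['M[C]_d]_n) : Prop :=
  exists (m : nat) (c : 'I_m -> C) (v : 'I_m -> 'M['M[C]_d]_n),
    (forall i, S (v i)) /\ X = \sum_(i < m) bscale (c i) (v i).

(* A permutation sigma of {1,..,n-1} is encoded as s : {perm 'I_n}
   fixing 0.  sigma(A) has B_0 = A_0, B_k = A_{sigma^-1 k},
   B_{k-n} = A_{sigma^-1(k) - n} for 1 <= k <= n-1. *)
Definition sigma_sym d n (s : {perm 'I_n}) (f : int -> 'M[C]_d) (m : int)
    : 'M[C]_d :=
  if m == 0 then f 0 else
  let k : nat := if 0 < m then absz m else absz (m + n%:Z) in
  if @insub nat (fun k => k < n)%N _ k is Some o then
    let k' : nat := val ((s^-1)%g o) in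
    if 0 < m then f k'%:Z else f (k'%:Z - n%:Z)
  else f m.

End Defs.

Arguments toeplitz_mx {C d} n f.
Arguments Ek {C d n} k T.
Arguments sigma_sym {C d n} s f m.
Arguments is_max_subalg_in {C d} n A B.
Arguments Tnd {C d n} A T.
Arguments Dnd {C d n} A T.
Arguments bspan {C d n} S X.
Arguments is_max_comm_subalg {C d} S.

(* Main.v *)
Require Import Defs.
From HB Require Import structures.
From mathcomp Require Import all_boot all_order all_algebra all_fingroup.
From mathcomp Require Import zify ring.
From Stdlib Require Import Classical.
Import Order.TTheory GRing.Theory Num.Theory.
Set Implicit Arguments. Unset Strict Implicit. Unset Printing Implicit Defensive.
Local Open Scope ring_scope.

Definition ent (C : numClosedFieldType) d n (X : 'M['M[C]_d]_n) (i j : nat) : 'M[C]_d :=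
  if (insub i : option 'I_n) is Some i' then
    if (insub j : option 'I_n) is Some j' then X i' j' else 0 else 0.

Definition sym (C : numClosedFieldType) d n (X : 'M['M[C]_d]_n) (m : int) : 'M[C]_d :=
  if (0 <= m) then ent X (absz m) 0 else ent X 0 (absz m).

Lemma ent_toep (C : numClosedFieldType) d n (f : int -> 'M[C]_d) (i j : nat) :
  (i < n)%N -> (j < n)%N -> ent (toeplitz_mx n f) i j = f (i%:Z - j%:Z).
Proof.
move=> hi hj; rewrite /ent.
case: insubP => [i' _ vi|]; last by rewrite hi.
case: insubP => [j' _ vj|]; last by rewrite hj.
by rewrite mxE vi vj.
Qed.

Lemma ent_ord (C : numClosedFieldType) d n (X : 'M['M[C]_d]_n) (i j : 'I_n) :
  ent X i j = X i j.
Proof. by rewrite /ent !valK. Qed.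

Lemma sym_toep (C : numClosedFieldType) d n (f : int -> 'M[C]_d) (m : int) :
  - (n%:Z) < m < n%:Z -> sym (toeplitz_mx n f) m = f m.
Proof.
case/andP=> h1 h2; rewrite /sym.
case: ifP => h0.
  rewrite ent_toep; first (congr f; lia).
  - lia.
  - lia.
rewrite ent_toep; first (congr f; lia).
- lia.
- lia.
Qed.

Lemma Tnd_sym (C : numClosedFieldType) d n (A : 'M[C]_d -> Prop) (X : 'M['M[C]_d]_n) :
  Tnd A X -> X = toeplitz_mx n (sym X) /\
     (forall m : int, - (n%:Z) < m < n%:Z -> A (sym X m)).
Proof.
case=> f [hf ->]; split; last first.
  by move=> m hm; rewrite sym_toep //; apply: hf.
apply/matrixP=> i j; rewrite !mxE sym_toep //.
have := ltn_ord i; have := ltn_ord j; lia.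
Qed.

Lemma ent_add (C : numClosedFieldType) d n (X Y : 'M['M[C]_d]_n) i j :
  ent (X + Y) i j = ent X i j + ent Y i j.
Proof.
rewrite /ent; case: insub => [i'|]; last by rewrite addr0.
case: insub => [j'|]; last by rewrite addr0.
by rewrite mxE.
Qed.

Lemma ent_scale (C : numClosedFieldType) d n c (X : 'M['M[C]_d]_n) i j :
  ent (bscale c X) i j = c *: ent X i j.
Proof.
rewrite /ent; case: insub => [i'|]; last by rewrite scaler0.
case: insub => [j'|]; last by rewrite scaler0.
by rewrite mxE.
Qed.

Lemma ent0 (C : numClosedFieldType) d n i j :
  ent (0 : 'M['M[C]_d]_n) i j = 0.
Proof.
rewrite /ent; case: insub => [i'|] //; case: insub => [j'|] //.
by rewrite mxE.
Qed.

Lemma sym_add (C : numClosedFieldType) d n (X Y : 'M['M[C]_d]_n) m :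
  sym (X + Y) m = sym X m + sym Y m.
Proof. by rewrite /sym; case: ifP => _; rewrite ent_add. Qed.

Lemma sym_scale (C : numClosedFieldType) d n c (X : 'M['M[C]_d]_n) m :
  sym (bscale c X) m = c *: sym X m.
Proof. by rewrite /sym; case: ifP => _; rewrite ent_scale. Qed.

Lemma sym0 (C : numClosedFieldType) d n m :
  sym (0 : 'M['M[C]_d]_n) m = 0.
Proof. by rewrite /sym; case: ifP => _; rewrite ent0. Qed.
Lemma scal_mull (C : numClosedFieldType) d (c : C) (a b : 'M[C]_d) : (c *: a) * b = c *: (a * b).
Proof. change ((c *: a) *m b = c *: (a *m b)). by rewrite scalemxAl. Qed.
Lemma scal_mulr (C : numClosedFieldType) d (c : C) (a b : 'M[C]_d) : a * (c *: b) = c *: (a * b).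
Proof. change (a *m (c *: b) = c *: (a *m b)). by rewrite scalemxAr. Qed.

Definition Esum (C : numClosedFieldType) d (f g : int -> 'M[C]_d) n (i j : nat) :=
  \sum_(q < n) f (i%:Z - q%:Z) * g (q%:Z - j%:Z).

Lemma mulE (C : numClosedFieldType) d n (f g : int -> 'M[C]_d) (i j : 'I_n) :
  (toeplitz_mx n f *m toeplitz_mx n g) i j = Esum f g n i j.
Proof. by rewrite mxE; apply: eq_bigr => q _; rewrite !mxE. Qed.

Lemma Eshift (C : numClosedFieldType) d (f g : int -> 'M[C]_d) n i j :
  (0 < n)%N ->
  Esum f g n i.+1 j.+1 + f (i%:Z - (n.-1)%:Z) * g ((n.-1)%:Z - j%:Z) =
  Esum f g n i j + f (i.+1%:Z) * g (- (j.+1)%:Z).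
Proof.
case: n => // n _ /=; rewrite /Esum big_ord_recl big_ord_recr /=.
have e1 : f (i.+1%:Z - (0%N)%:Z) * g ((0%N)%:Z - j.+1%:Z) = f (i.+1%:Z) * g (- (j.+1)%:Z).
  by congr (f _ * g _); lia.
have e2 : \sum_(q < n) f (i.+1%:Z - (bump 0 q)%:Z) * g ((bump 0 q)%:Z - j.+1%:Z)
        = \sum_(q < n) f (i%:Z - q%:Z) * g (q%:Z - j%:Z).
  by apply: eq_bigr => q _; rewrite /bump /=; congr (f _ * g _); lia.
by rewrite e1 e2 -addrA addrC.
Qed.

Definition inr_ (n : nat) (m : int) := - (n%:Z) < m < n%:Z.

Lemma Esum_in (C : numClosedFieldType) d (A : 'M[C]_d -> Prop) (f g : int -> 'M[C]_d) n i j :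
  is_subalg_d A -> (forall m, inr_ n m -> A (f m)) -> (forall m, inr_ n m -> A (g m)) ->
  (i < n)%N -> (j < n)%N -> A (Esum f g n i j).
Proof.
case=> A0 AD _ AM hf hg hi hj; rewrite /Esum.
apply: (big_ind A) => // q _; apply: AM; [apply: hf|apply: hg]; rewrite /inr_;
 have := ltn_ord q; lia.
Qed.

Definition hc (C : numClosedFieldType) d n (f g : int -> 'M[C]_d) :=
  forall i j : nat, (i.+1 < n)%N -> (j.+1 < n)%N ->
    f (i.+1%:Z) * g (- (j.+1)%:Z) = f (i%:Z - (n.-1)%:Z) * g ((n.-1)%:Z - j%:Z).

Lemma Ediag (C : numClosedFieldType) d n (f g : int -> 'M[C]_d) :
  hc n f g -> forall a b c, (a + c < n)%N -> (b + c < n)%N ->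
  Esum f g n (a + c) (b + c) = Esum f g n a b.
Proof.
move=> h a b; elim=> [|c IH] ha hb; first by rewrite !addn0.
rewrite !addnS in ha hb *.
have e := Eshift f g (a + c) (b + c) (leq_ltn_trans (leq0n _) ha).
rewrite (h _ _ ha hb) in e.
rewrite -IH; [|lia|lia].
by move/addIr: e.
Qed.

Lemma key (C : numClosedFieldType) d (A : 'M[C]_d -> Prop) n (f g : int -> 'M[C]_d) :
  is_subalg_d A -> (forall m, inr_ n m -> A (f m)) -> (forall m, inr_ n m -> A (g m)) ->
  hc n f g -> Tnd A (toeplitz_mx n f *m toeplitz_mx n g).
Proof.
move=> sA hf hg h.
exists (fun m => if (0 <= m) then Esum f g n (absz m) 0 else Esum f g n 0 (absz m)).
split.
  move=> m hm; case: ifP => h0; apply: Esum_in => //; rewrite /inr_ in hm; lia.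
apply/matrixP=> i j; rewrite mulE mxE.
have hi := ltn_ord i; have hj := ltn_ord j.
case: (leqP j i) => hji.
  have -> : (0 <= i%:Z - j%:Z) = true by lia.
  have -> : absz (i%:Z - j%:Z) = (i - j)%N by lia.
  have := @Ediag C d n f g h (i - j)%N 0 j.
  by rewrite subnK // add0n; move/(_ hi hj) => ->.
have -> : (0 <= i%:Z - j%:Z) = false by lia.
have -> : absz (i%:Z - j%:Z) = (j - i)%N by lia.
have e := @Ediag C d n f g h 0 (j - i)%N i.
rewrite add0n subnK in e; last exact: ltnW.
by rewrite e.
Qed.

Lemma key_conv (C : numClosedFieldType) d (A : 'M[C]_d -> Prop) n (f g : int -> 'M[C]_d) :
  Tnd A (toeplitz_mx n f *m toeplitz_mx n g) -> hc n f g.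
Proof.
case=> h [_ eh] i j hi hj.
have e := Eshift f g i j (leq_ltn_trans (leq0n _) hi).
have e1 := congr1 (fun M : 'M['M[C]_d]_n => M (Ordinal hi) (Ordinal hj)) eh.
have e2 := congr1 (fun M : 'M['M[C]_d]_n => M (Ordinal (ltnW hi)) (Ordinal (ltnW hj))) eh.
rewrite /= !mulE /= !mxE in e1 e2.
have e3 : Esum f g n i.+1 j.+1 = Esum f g n i j.
  rewrite e1 e2 /=; congr h; lia.
by rewrite e3 in e; symmetry; exact: (addrI _ e).
Qed.

Definition compat (C : numClosedFieldType) d n (X Y : 'M['M[C]_d]_n) :=
  forall k l : nat, (0 < k < n)%N -> (0 < l < n)%N ->
    sym X k%:Z * sym Y (l%:Z - n%:Z) = sym X (k%:Z - n%:Z) * sym Y l%:Z.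

Lemma compat_iff (C : numClosedFieldType) d n (X Y : 'M['M[C]_d]_n) :
  compat X Y <-> hc n (sym X) (sym Y).
Proof.
split=> h.
  move=> i j hi hj.
  have := h i.+1 (n.-1 - j)%N hi ltac:(lia).
  have -> : ((n.-1 - j)%N%:Z - n%:Z) = - (j.+1)%:Z by lia.
  have -> : (i.+1%:Z - n%:Z) = i%:Z - (n.-1)%:Z by lia.
  by have -> : ((n.-1 - j)%N%:Z) = (n.-1)%:Z - j%:Z by lia.
move=> k l /andP[k0 kn] /andP[l0 ln].
have := h k.-1 (n.-1 - l)%N ltac:(lia) ltac:(lia).
have -> : k.-1.+1 = k by lia.
have -> : - (n.-1 - l)%N.+1%:Z = l%:Z - n%:Z by lia.
have -> : k.-1%:Z - (n.-1)%:Z = k%:Z - n%:Z by lia.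
by have -> : (n.-1)%:Z - (n.-1 - l)%N%:Z = l%:Z by lia.
Qed.

Lemma ent_mul (C : numClosedFieldType) d n (f g : int -> 'M[C]_d) (i j : nat) :
  (i < n)%N -> (j < n)%N -> ent (toeplitz_mx n f *m toeplitz_mx n g) i j = Esum f g n i j.
Proof.
move=> hi hj; rewrite /ent.
case: insubP => [i' _ vi|]; last by rewrite hi.
case: insubP => [j' _ vj|]; last by rewrite hj.
by rewrite mulE vi vj.
Qed.

Lemma sym_mulp (C : numClosedFieldType) d n (f g : int -> 'M[C]_d) (k : nat) :
  (k < n)%N -> sym (toeplitz_mx n f *m toeplitz_mx n g) k%:Z = Esum f g n k 0.
Proof. by move=> hk; rewrite /sym /= ent_mul //; lia. Qed.

Lemma sym_muln (C : numClosedFieldType) d n (f g : int -> 'M[C]_d) (k : nat) :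
  (0 < k < n)%N -> sym (toeplitz_mx n f *m toeplitz_mx n g) (k%:Z - n%:Z) = Esum f g n 0 (n - k).
Proof.
move=> hk; rewrite /sym.
have -> : (0 <= k%:Z - n%:Z) = false by lia.
have -> : absz (k%:Z - n%:Z) = (n - k)%N by lia.
rewrite ent_mul //; lia.
Qed.

Lemma E_compat (C : numClosedFieldType) d (f g z : int -> 'M[C]_d) n i j :
  (0 < n)%N ->
  (forall q : nat, (q.+1 < n)%N ->
     g (q.+1%:Z) * z (- (j.+1)%:Z) = g (q%:Z - (n.-1)%:Z) * z ((n.-1)%:Z - j%:Z)) ->
  f (i.+1%:Z) * g 0 * z (- (j.+1)%:Z) = f (i%:Z - (n.-1)%:Z) * g 0 * z ((n.-1)%:Z - j%:Z) ->
  Esum f g n i.+1 0 * z (- (j.+1)%:Z) = Esum f g n i n.-1 * z ((n.-1)%:Z - j%:Z).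
Proof.
case: n => // n _ hq h0 /=; rewrite /Esum big_ord_recl big_ord_recr /= !mulrDl.
have e1 : f (i.+1%:Z - (0%N)%:Z) * g ((0%N)%:Z - (0%N)%:Z) = f (i.+1%:Z) * g 0.
  by congr (f _ * g _); lia.
have e2 : f (i%:Z - n%:Z) * g (n%:Z - n%:Z) = f (i%:Z - n%:Z) * g 0.
  by congr (f _ * g _); lia.
rewrite e1 e2 h0 addrC; congr (_ + _).
rewrite !mulr_suml; apply: eq_bigr => q _.
rewrite -!mulrA; congr (_ * _).
  by rewrite /bump /=; congr f; lia.
have := hq q (ltn_ord q).
rewrite /bump /=.
have -> : ((1 + q)%N%:Z - (0%N)%:Z) = q.+1%:Z by lia.
by move=> ->.
Qed.

Lemma compat_mul (C : numClosedFieldType) d (A : 'M[C]_d -> Prop) n (X Y Z : 'M['M[C]_d]_n) :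
  is_commutative_d A -> Tnd A X -> Tnd A Y -> Tnd A Z ->
  compat X Y -> compat X Z -> compat Y Z -> compat (X *m Y) Z.
Proof.
move=> cA hX hY hZ cXY cXZ cYZ.
have [eX aX] := Tnd_sym hX; have [eY aY] := Tnd_sym hY; have [eZ aZ] := Tnd_sym hZ.
move/compat_iff: cXY => cXY; move/compat_iff: cXZ => cXZ; move/compat_iff: cYZ => cYZ.
apply/compat_iff; rewrite {1}eX {1}eY => i j hi hj.
rewrite sym_mulp //.
have -> : i%:Z - (n.-1)%:Z = (i.+1)%:Z - n%:Z by lia.
rewrite sym_muln ?hi //.
have eD := Ediag cXY (a:=0%N) (b:=(n - i.+1)%N) (c:=i).
rewrite add0n in eD; have e' : (n - i.+1 + i)%N = n.-1 by lia.
rewrite e' in eD; rewrite -eD; [|lia|lia].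

apply: E_compat; first lia.
  by move=> q hq; apply: cYZ.
have ag : A (sym Y 0) by apply: aY; rewrite /inr_; lia.
rewrite -!mulrA (cA _ _ ag (aZ _ _)); last by rewrite /inr_; lia.
rewrite (cA _ _ ag (aZ _ _)); last by rewrite /inr_; lia.
by rewrite !mulrA cXZ.
Qed.

Lemma compat_sym (C : numClosedFieldType) d (A : 'M[C]_d -> Prop) n (X Y : 'M['M[C]_d]_n) :
  is_commutative_d A -> Tnd A X -> Tnd A Y -> compat X Y -> compat Y X.
Proof.
move=> cA hX hY h k l hk hl.
have [_ aX] := Tnd_sym hX; have [_ aY] := Tnd_sym hY.
have r : forall m : nat, (0 < m < n)%N -> inr_ n m /\ inr_ n (m%:Z - n%:Z).
  by move=> m hm; rewrite /inr_; split; lia.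
have [k1 k2] := r k hk; have [l1 l2] := r l hl.
rewrite (cA _ _ (aY _ k1) (aX _ l2)) -h // (cA _ _ (aX _ l1) (aY _ k2)) //.
Qed.

Lemma compat_addl (C : numClosedFieldType) d n (X Y Z : 'M['M[C]_d]_n) :
  compat X Z -> compat Y Z -> compat (X + Y) Z.
Proof. by move=> h1 h2 k l hk hl; rewrite !sym_add !mulrDl h1 ?h2. Qed.
Lemma compat_scalel (C : numClosedFieldType) d n c (X Z : 'M['M[C]_d]_n) :
  compat X Z -> compat (bscale c X) Z.
Proof. by move=> h1 k l hk hl; rewrite !sym_scale !scal_mull h1. Qed.
Lemma compat_0l (C : numClosedFieldType) d n (Z : 'M['M[C]_d]_n) :
  compat 0 Z.
Proof. by move=> k l hk hl; rewrite !sym0 !mul0r. Qed.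

Lemma Tnd0 (C : numClosedFieldType) d (A : 'M[C]_d -> Prop) n :
  is_subalg_d A -> Tnd A (0 : 'M['M[C]_d]_n).
Proof.
case=> A0 _ _ _; exists (fun _ => 0); split => //.
by apply/matrixP=> i j; rewrite !mxE.
Qed.

Lemma Tnd_add (C : numClosedFieldType) d (A : 'M[C]_d -> Prop) n (X Y : 'M['M[C]_d]_n) :
  is_subalg_d A -> Tnd A X -> Tnd A Y -> Tnd A (X + Y).
Proof.
case=> _ AD _ _ [f [hf ->]] [g [hg ->]]; exists (fun m => f m + g m); split.
  by move=> m hm; apply: AD; [apply: hf|apply: hg].
by apply/matrixP=> i j; rewrite !mxE.
Qed.

Lemma Tnd_scale (C : numClosedFieldType) d (A : 'M[C]_d -> Prop) n c (X : 'M['M[C]_d]_n) :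
  is_subalg_d A -> Tnd A X -> Tnd A (bscale c X).
Proof.
case=> _ _ AS _ [f [hf ->]]; exists (fun m => c *: f m); split.
  by move=> m hm; apply: AS; apply: hf.
by apply/matrixP=> i j; rewrite !mxE.
Qed.

Lemma Tnd_mul (C : numClosedFieldType) d (A : 'M[C]_d -> Prop) n (X Y : 'M['M[C]_d]_n) :
  is_subalg_d A -> Tnd A X -> Tnd A Y -> compat X Y -> Tnd A (X *m Y).
Proof.
move=> sA hX hY /compat_iff h.
have [eX aX] := Tnd_sym hX; have [eY aY] := Tnd_sym hY.
by rewrite {1}eX {1}eY; apply: key.
Qed.

Lemma mul_compat (C : numClosedFieldType) d (A : 'M[C]_d -> Prop) n (X Y : 'M['M[C]_d]_n) :
  Tnd A X -> Tnd A Y -> Tnd A (X *m Y) -> compat X Y.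
Proof.
move=> hX hY hXY; apply/compat_iff.
have [eX aX] := Tnd_sym hX; have [eY aY] := Tnd_sym hY.
by rewrite {1}eX {1}eY in hXY; apply: key_conv hXY.
Qed.

Lemma absorb (C : numClosedFieldType) d (A : 'M[C]_d -> Prop) n
    (B : 'M['M[C]_d]_n -> Prop) (W : 'M['M[C]_d]_n) :
  is_subalg_d A -> is_commutative_d A -> is_max_subalg_in n A B ->
  Tnd A W -> compat W W -> (forall Y, B Y -> compat W Y) -> B W.
Proof.
move=> sA cA [[B0 BD BS BM] BT Bmax] hW cWW cWB.
pose S s := B s \/ s = W.
have ST : forall s, S s -> Tnd A s by move=> s [/BT|->].
have cS : forall s t, S s -> S t -> compat s t.
  move=> s t [hs|->] [ht|->] //.
  - by apply: mul_compat; [apply: BT|apply: BT|apply: BT; apply: BM].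
  - by apply: (compat_sym cA); [apply: hW|apply: BT|apply: cWB].
  - by apply: cWB.
pose S' Z := Tnd A Z /\ forall s, S s -> compat s Z.
pose B' X := Tnd A X /\ forall Z, S' Z -> compat X Z.
have SB' : forall s, S s -> B' s.
  by move=> s hs; split; [apply: ST|move=> Z hZ; exact: hZ.2 s hs].
have cB' : forall X Y, B' X -> B' Y -> compat X Y.
  move=> X Y [hX cX] [hY cY]; apply: cX; split => // s hs.
  apply: (compat_sym cA) => //; first by apply: ST.
  apply: cY; split; first by apply: ST.
  by move=> t ht; apply: cS.
have BW' : B' W by apply: SB'; rewrite /S; right.
apply: (Bmax B' _ _ _ W BW').
- split.
  + by split; [apply: Tnd0|move=> Z _; apply: compat_0l].
  + move=> X Y [hX cX] [hY cY]; split; first by apply: Tnd_add.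
    by move=> Z hZ; apply: compat_addl; [apply: cX|apply: cY].
  + move=> c X [hX cX]; split; first by apply: Tnd_scale.
    by move=> Z hZ; apply: compat_scalel; apply: cX.
  + move=> X Y hX' hY'; have cXY := cB' _ _ hX' hY'.
    case: hX' => hX cX; case: hY' => hY cY; split; first by apply: Tnd_mul.
    move=> Z hZ; apply: (compat_mul cA) => //; first by case: hZ.
    * by apply: cX.
    * by apply: cY.
- by move=> X hX; apply: SB'; left.
- by move=> X [].
Qed.

Lemma sc1l (C : numClosedFieldType) d (c : C) (y : 'M[C]_d) : (c *: (1 : 'M[C]_d)) * y = c *: y.
Proof. by rewrite scal_mull mul1r. Qed.
Lemma sc1r (C : numClosedFieldType) d (c : C) (y : 'M[C]_d) : y * (c *: (1 : 'M[C]_d)) = c *: y.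
Proof. by rewrite scal_mulr mulr1. Qed.

Lemma A1 (C : numClosedFieldType) d (A : 'M[C]_d -> Prop) :
  is_max_comm_subalg A -> A 1.
Proof.
case=> [[A0 AD AS AM] cA mA].
pose S (X : 'M[C]_d) := exists a (c : C), A a /\ X = a + c *: (1 : 'M[C]_d).
apply: (mA S).
- split.
  + by exists 0, 0; rewrite scale0r addr0.
  + move=> X Y [a [c [ha ->]]] [b [e [hb ->]]]; exists (a + b), (c + e); split; first exact: AD.
    by rewrite scalerDl addrACA.
  + move=> k X [a [c [ha ->]]]; exists (k *: a), (k * c); split; first exact: AS.
    by rewrite scalerDr scalerA.
  + move=> X Y [a [c [ha ->]]] [b [e [hb ->]]].
    exists (a * b + c *: b + e *: a), (c * e); split.
      exact: (AD _ _ (AD _ _ (AM _ _ ha hb) (AS _ _ hb)) (AS _ _ ha)).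
    rewrite mulrDl !mulrDr sc1l sc1r sc1l scalerA.
    rewrite -!addrA; congr (_ + _); rewrite addrC -!addrA; congr (_ + _).
    by rewrite addrC.
- move=> X Y [a [c [ha ->]]] [b [e [hb ->]]].
  rewrite !mulrDl !mulrDr !sc1l !sc1r !scalerA (cA a b) // (mulrC c e).
  by rewrite -!addrA; congr (_ + _); rewrite !addrA; congr (_ + _); rewrite addrC.
- by move=> X hX; exists X, 0; rewrite scale0r addr0.
- by exists 0, 1; rewrite scale1r add0r.
Qed.

Definition copyP (C : numClosedFieldType) d n (X W : 'M['M[C]_d]_n) :=
  forall k : nat, (0 < k < n)%N ->
    (sym W k%:Z = 0 /\ sym W (k%:Z - n%:Z) = 0) \/
    exists2 k' : nat, (0 < k' < n)%N &
      sym W k%:Z = sym X k'%:Z /\ sym W (k%:Z - n%:Z) = sym X (k'%:Z - n%:Z).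

Lemma copy (C : numClosedFieldType) d (A : 'M[C]_d -> Prop) n
    (B : 'M['M[C]_d]_n -> Prop) (X W : 'M['M[C]_d]_n) :
  is_subalg_d A -> is_commutative_d A -> is_max_subalg_in n A B ->
  B X -> Tnd A W -> copyP X W -> B W.
Proof.
move=> sA cA hB hX hW cp.
have [[B0 BD BS BM] BT Bmax] := hB.
have cBB : forall Y Z, B Y -> B Z -> compat Y Z.
  by move=> Y Z hY hZ; apply: mul_compat; [apply: BT|apply: BT|apply: BT; apply: BM].
apply: (absorb sA cA hB hW).
  move=> k l hk hl.
  case: (cp k hk) => [[-> ->]|[k' hk' [-> ->]]]; first by rewrite !mul0r.
  case: (cp l hl) => [[-> ->]|[l' hl' [-> ->]]]; first by rewrite !mulr0.
  by apply: cBB.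
move=> Y hY k l hk hl.
case: (cp k hk) => [[-> ->]|[k' hk' [-> ->]]]; first by rewrite !mul0r.
by apply: cBB.
Qed.

Lemma part1 (C : numClosedFieldType) d (A : 'M[C]_d -> Prop) n
    (B : 'M['M[C]_d]_n -> Prop) (X : 'M['M[C]_d]_n) :
  is_subalg_d A -> is_commutative_d A -> is_max_subalg_in n A B ->
  Dnd A X -> B X.
Proof.
move=> sA cA hB [f [hfA [hf0 eX]]].
have B0 : B 0 by case: hB => [[]].
apply: (copy sA cA hB B0); first by exists f.
move=> k hk; left; rewrite eX !sym_toep; try (rewrite /inr_; lia).
by rewrite !hf0 //; lia.
Qed.

Lemma Ek_toep (C : numClosedFieldType) d n (X : 'M['M[C]_d]_n) k :
  X = toeplitz_mx n (sym X) ->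
  Ek k X = toeplitz_mx n (fun m => if (m == k%:Z) || (m == k%:Z - n%:Z) then sym X m else 0).
Proof.
move=> eX; apply/matrixP => i j; rewrite !mxE.
by case: ifP => // _; rewrite {1}eX mxE.
Qed.

Lemma part2 (C : numClosedFieldType) d (A : 'M[C]_d -> Prop) n
    (B : 'M['M[C]_d]_n -> Prop) (X : 'M['M[C]_d]_n) k :
  is_subalg_d A -> is_commutative_d A -> is_max_subalg_in n A B ->
  B X -> (k < n)%N -> B (Ek k X).
Proof.
move=> sA cA hB hX hk.
have hTX : Tnd A X by case: hB => _ BT _; apply: BT.
have [eX aX] := Tnd_sym hTX.
have A0 : A 0 by case: sA.
apply: (copy sA cA hB hX).
  rewrite (Ek_toep k eX); eexists; split; last reflexivity.
  by move=> m hm /=; case: ifP => _ //; apply: aX.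
move=> k' hk'; rewrite (Ek_toep k eX) !sym_toep; try (rewrite /inr_; lia).
case: (eqVneq k' k) => [ek|ne].
  subst k'; right; exists k => //; split; first by rewrite eqxx.
  have -> : (k%:Z - n%:Z == k%:Z) = false by lia.
  by rewrite eqxx.
left.
have -> : (k'%:Z == k%:Z) = false by lia.
have -> : (k'%:Z == k%:Z - n%:Z) = false by lia.
have -> : (k'%:Z - n%:Z == k%:Z) = false by lia.
by have -> : (k'%:Z - n%:Z == k%:Z - n%:Z) = false by lia.
Qed.

Lemma sigma0 (C : numClosedFieldType) d n (s : {perm 'I_n}) (f : int -> 'M[C]_d) :
  sigma_sym s f 0 = f 0.
Proof. by rewrite /sigma_sym eqxx. Qed.

Lemma sigmak (C : numClosedFieldType) d n (s : {perm 'I_n}) (f : int -> 'M[C]_d) (k : nat) :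
  (forall i : 'I_n, val i = 0%N -> val (s i) = 0%N) -> (0 < k < n)%N ->
  exists2 k' : nat, (0 < k' < n)%N &
    sigma_sym s f k%:Z = f k'%:Z /\ sigma_sym s f (k%:Z - n%:Z) = f (k'%:Z - n%:Z).
Proof.
move=> hs /andP[k0 kn].
have [o vo] : exists o : 'I_n, val o = k by exists (Ordinal kn).
exists (val ((s^-1)%g o)).
  rewrite ltn_ord andbT lt0n; apply/eqP => h.
  have := hs _ h; rewrite permKV vo; lia.
rewrite /sigma_sym.
have -> : (k%:Z == 0) = false by lia.
have -> : (k%:Z - n%:Z == 0) = false by lia.
have -> : (0 < k%:Z) = true by lia.
have -> : (0 < k%:Z - n%:Z) = false by lia.
have -> : absz (k%:Z) = k by [].
have -> : absz (k%:Z - n%:Z + n%:Z) = k by lia.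
case: insubP => [u _ vu|]; last by rewrite kn.
have -> : u = o by apply: val_inj; rewrite vu vo.
by [].
Qed.

Lemma int_cases (n : nat) (m : int) : - (n%:Z) < m < n%:Z ->
  m = 0 \/ (exists2 k : nat, (0 < k < n)%N & m = k%:Z) \/
  (exists2 k : nat, (0 < k < n)%N & m = k%:Z - n%:Z).
Proof.
move=> hm; case: m hm => [k|k] hm.
  case: k hm => [|k] hm; first by left.
  by right; left; exists k.+1 => //; lia.
by right; right; exists (n - k.+1)%N; lia.
Qed.

Lemma part4 (C : numClosedFieldType) d (A : 'M[C]_d -> Prop) n
    (B : 'M['M[C]_d]_n -> Prop) (s : {perm 'I_n}) (X : 'M['M[C]_d]_n) f :
  is_subalg_d A -> is_commutative_d A -> is_max_subalg_in n A B ->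
  (forall i : 'I_n, val i = 0%N -> val (s i) = 0%N) ->
  B X -> X = toeplitz_mx n f -> B (toeplitz_mx n (sigma_sym s f)).
Proof.
move=> sA cA hB hs hX eX.
have hTX : Tnd A X by case: hB => _ BT _; apply: BT.
have [_ aX] := Tnd_sym hTX.
have sX : forall m, inr_ n m -> sym X m = f m by move=> m hm; rewrite eX sym_toep.
have hfA : forall m, inr_ n m -> A (f m) by move=> m hm; rewrite -sX //; apply: aX.
apply: (copy sA cA hB hX).
  exists (sigma_sym s f); split => // m hm.
  case: (int_cases hm) => [->|[[k hk ->]|[k hk ->]]].
  - by rewrite sigma0; apply: hfA; rewrite /inr_; lia.
  - have [k' hk' [-> _]] := sigmak f hs hk; apply: hfA; rewrite /inr_; lia.
  - have [k' hk' [_ ->]] := sigmak f hs hk; apply: hfA; rewrite /inr_; lia.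
move=> k hk; right.
have [k' hk' [e1 e2]] := sigmak f hs hk.
exists k' => //.
rewrite !sym_toep ?e1 ?e2 ?sX //; rewrite /inr_; lia.
Qed.

Definition Jf (C : numClosedFieldType) d (n k : nat) (a b : 'M[C]_d) (m : int) : 'M[C]_d :=
  if m == k%:Z then a else if m == k%:Z - n%:Z then b else 0.

Lemma Ek_J (C : numClosedFieldType) d n k (a b : 'M[C]_d) :
  Ek k (toeplitz_mx n (Jf n k a b)) = toeplitz_mx n (Jf n k a b).
Proof.
apply/matrixP=> i j; rewrite !mxE; case: ifP => // /norP[/negbTE h1 /negbTE h2].
by rewrite /Jf h1 h2.
Qed.

Lemma J_nz (C : numClosedFieldType) d n k (a b : 'M[C]_d) :
  (k < n)%N -> (a != 0) || ((0 < k)%N && (b != 0)) -> toeplitz_mx n (Jf n k a b) != 0.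
Proof.
move=> hk /orP[ha|/andP[k0 hb]]; apply/eqP => h.
  have := congr1 (fun M : 'M['M[C]_d]_n => M (Ordinal hk) (Ordinal (leq_ltn_trans (leq0n k) hk))) h.
  rewrite !mxE /Jf /=.
  have -> : (k%:Z - 0%:Z == k%:Z) = true by lia.
  by move=> e; rewrite e eqxx in ha.
have h2 : (n - k < n)%N by lia.
have := congr1 (fun M : 'M['M[C]_d]_n => M (Ordinal (leq_ltn_trans (leq0n k) hk)) (Ordinal h2)) h.
rewrite !mxE /Jf /=.
have -> : (0%:Z - (n - k)%N%:Z == k%:Z) = false by lia.
have -> : (0%:Z - (n - k)%N%:Z == k%:Z - n%:Z) = true by lia.
by move=> e; rewrite e eqxx in hb.
Qed.

Lemma J_Tnd (C : numClosedFieldType) d (A : 'M[C]_d -> Prop) n k (a b : 'M[C]_d) :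
  A 0 -> A a -> A b -> Tnd A (toeplitz_mx n (Jf n k a b)).
Proof.
move=> A0 ha hb; exists (Jf n k a b); split => // m _.
by rewrite /Jf; case: ifP => _ //; case: ifP.
Qed.

Lemma J_sym (C : numClosedFieldType) d n k (a b : 'M[C]_d) (k' : nat) :
  (0 < k < n)%N -> (0 < k' < n)%N ->
  sym (toeplitz_mx n (Jf n k a b)) k'%:Z = (if k' == k then a else 0) /\
  sym (toeplitz_mx n (Jf n k a b)) (k'%:Z - n%:Z) = (if k' == k then b else 0).
Proof.
move=> hk hk'; rewrite !sym_toep; try (rewrite /inr_; lia).
rewrite /Jf; case: (eqVneq k' k) => [->|ne].
  rewrite eqxx; split => //.
  have -> : (k%:Z - n%:Z == k%:Z) = false by lia.
  by rewrite eqxx.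
have -> : (k'%:Z == k%:Z) = false by lia.
have -> : (k'%:Z == k%:Z - n%:Z) = false by lia.
have -> : (k'%:Z - n%:Z == k%:Z) = false by lia.
by have -> : (k'%:Z - n%:Z == k%:Z - n%:Z) = false by lia.
Qed.

Lemma part5 (C : numClosedFieldType) d (A : 'M[C]_d -> Prop) n
    (B : 'M['M[C]_d]_n -> Prop) k :
  (0 < d)%N -> is_max_comm_subalg A -> is_max_subalg_in n A B ->
  (k < n)%N -> exists2 X, B X & Ek k X != 0.
Proof.
move=> d0 mA hB hk.
have A1' := A1 mA.
case: mA => sA cA _.
have A0 : A 0 by case: sA.
have one0 : (1 : 'M[C]_d) != 0.
  apply/eqP => h; have := congr1 (fun M : 'M[C]_d => M (Ordinal d0) (Ordinal d0)) h.
  by rewrite !mxE eqxx /= => /eqP; rewrite oner_eq0.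
have [[B0 BD BS BM] BT Bmax] := hB.
case: (posnP k) => [k0|kpos].
  subst k; exists (toeplitz_mx n (Jf n 0 1 0)); last by rewrite Ek_J J_nz ?one0.
  apply: (copy sA cA hB B0); first by apply: J_Tnd.
  move=> k' hk'; left; rewrite !sym_toep; try (rewrite /inr_; lia).
  rewrite /Jf.
  have -> : (k'%:Z == (0%N)%:Z) = false by lia.
  have -> : (k'%:Z == (0%N)%:Z - n%:Z) = false by lia.
  have -> : (k'%:Z - n%:Z == (0%N)%:Z) = false by lia.
  by have -> : (k'%:Z - n%:Z == (0%N)%:Z - n%:Z) = false by lia.
have hk2 : (0 < k < n)%N by rewrite kpos.
case: (classic (exists2 Y, B Y & exists2 l : nat, (0 < l < n)%N &
          (sym Y l%:Z != 0) || (sym Y (l%:Z - n%:Z) != 0))) => [[Y hY [l hl hnz]]|hno].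
  have [_ aY] := Tnd_sym (BT _ hY).
  exists (toeplitz_mx n (Jf n k (sym Y l%:Z) (sym Y (l%:Z - n%:Z)))); last first.
    by rewrite Ek_J J_nz // kpos.
  apply: (copy sA cA hB hY); first by apply: J_Tnd => //; apply: aY; rewrite /inr_; lia.
  move=> k' hk'; have [-> ->] := J_sym (sym Y l%:Z) (sym Y (l%:Z - n%:Z)) hk2 hk'.
  case: eqP => _; first by right; exists l.
  by left.
have zY : forall Y, B Y -> forall l : nat, (0 < l < n)%N ->
    sym Y l%:Z = 0 /\ sym Y (l%:Z - n%:Z) = 0.
  move=> Y hY l hl; split; apply/eqP; apply: contraT => hn; exfalso; apply: hno;
    exists Y => //; exists l => //; by rewrite hn ?orbT.
exists (toeplitz_mx n (Jf n k 1 0)); last by rewrite Ek_J J_nz ?one0.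
apply: (@absorb C d A n B _ sA cA hB); first by apply: J_Tnd.
  move=> k' l hk' hl.
  have [_ ->] := J_sym (1 : 'M[C]_d) (0 : 'M[C]_d) hk2 hl; have [_ ->] := J_sym (1 : 'M[C]_d) (0 : 'M[C]_d) hk2 hk'.
  by rewrite !if_same mulr0 mul0r.
move=> Y hY k' l hk' hl.
have [-> ->] := zY Y hY l hl.
by rewrite !mulr0.
Qed.

Lemma bscale1 (C : numClosedFieldType) d n (X : 'M['M[C]_d]_n) : bscale 1 X = X.
Proof. by apply/matrixP => i j; rewrite mxE scale1r. Qed.

Lemma sumEk (C : numClosedFieldType) d n (X : 'M['M[C]_d]_n) :
  X = \sum_(i < n) Ek i X.
Proof.
apply/matrixP => r c; rewrite summxE.
have hr := ltn_ord r; have hc := ltn_ord c.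
have hq : ((if (c <= r)%N then r - c else r + n - c) < n)%N by case: ifP; lia.
rewrite (bigD1 (Ordinal hq)) //= mxE.
have -> : ((r%:Z - c%:Z == (if (c <= r)%N then r - c else r + n - c)%N%:Z)
        || (r%:Z - c%:Z == (if (c <= r)%N then r - c else r + n - c)%N%:Z - n%:Z)) = true.
  by case: ifP; lia.
rewrite big1 ?addr0 // => q hq'; rewrite mxE.
have hqn : (nat_of_ord q != (if (c <= r)%N then r - c else r + n - c))%N.
  by apply: contra hq' => /eqP e; apply/eqP; apply: val_inj.
case: ifP => // hcond; exfalso.
move: hcond hqn (ltn_ord q); case: (leqP c r) => hcr; lia.
Qed.

Lemma part3 (C : numClosedFieldType) d (A : 'M[C]_d -> Prop) n
    (B : 'M['M[C]_d]_n -> Prop) (X : 'M['M[C]_d]_n) :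
  is_subalg_d A -> is_commutative_d A -> is_max_subalg_in n A B ->
  B X <-> bspan (fun Y => exists2 k : nat, (k < n)%N &
                           exists2 Z, B Z & Y = Ek k Z) X.
Proof.
move=> sA cA hB; have [[B0 BD BS BM] BT Bmax] := hB; split.
  move=> hX; exists n, (fun _ => 1), (fun i => Ek i X); split.
    by move=> i; exists i => //; exists X.
  rewrite {1}(sumEk X); apply: eq_bigr => i _; by rewrite bscale1.
case=> m [c [v [hv ->]]].
apply: (big_ind B) => // i _; apply: BS.
have [k hk [Z hZ ->]] := hv i.
exact: (part2 sA cA hB hZ hk).
Qed.

Unset Implicit Arguments.

Theorem theorem4p5 (C : numClosedFieldType) (d n : nat)
    (A : 'M[C]_d -> Prop) (B : 'M['M[C]_d]_n -> Prop) :
  (0 < d)%N -> (2 <= n)%N ->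
  is_max_comm_subalg A -> is_max_subalg_in n A B ->
  [/\ (* (i) *)
      (forall X, Dnd A X -> B X),
      (* (ii) *)
      (forall X, B X -> forall k : nat, (k < n)%N -> B (Ek k X)),
      (* (iii) *)
      (forall X, B X <->
         bspan (fun Y => exists2 k : nat, (k < n)%N &
                           exists2 Z, B Z & Y = Ek k Z) X),
      (* (iv) *)
      (forall s : {perm 'I_n}, (forall i : 'I_n, val i = 0%N -> val (s i) = 0%N) ->
         forall (X : 'M['M[C]_d]_n) (f : int -> 'M[C]_d),
           B X -> X = toeplitz_mx n f -> B (toeplitz_mx n (sigma_sym s f))) &
      (* (v) *)
      (forall k : nat, (k < n)%N -> exists2 X, B X & Ek k X != 0)].
Proof.
move=> d0 n2 mA hB.
have [sA cA _] := mA.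
split.
- by move=> X; apply: (part1 sA cA hB).
- by move=> X hX k hk; apply: (part2 sA cA hB hX hk).
- by move=> X; apply: (part3 X sA cA hB).
- by move=> s hs X f hX eX; apply: (part4 sA cA hB hs hX eX).
- by move=> k hk; apply: (part5 d0 mA hB hk).
Qed.
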